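(* Let $G$ be an unweighted digraph of order $n$ without loops, with $b$ reciprocal pairs of edges (pairs $\{(i,j),(j,i)\}\subseteq E$), and let $0\le\tau\le1$. Then \[\det\bigl[I-t(\tau B+(1-\tau)W)\bigr]=(1-\tau^2t^2)^{\,b-n}\det M_\tau(t),\] where $M_\tau(t)=I-At+(D-\tau I)\tau t^2+(A-S)\tau^2t^3$.
   Context: $G=(V,E)$ with $V=\{1,\dots,n\}$, $m=\#E$, adjacency matrix $A$, $S=A\circ A^T$, $D=\mathrm{diag}(\mathrm{diag}(A^2))$. The line graph adjacency matrix $W\in\{0,1\}^{m\times m}$ is indexed by edges, with $W_{ef}=1$ iff the target vertex of $e$ equals the source vertex of $f$; equivalently $W=RL^T$ where $L,R\in\{0,1\}^{m\times n}$ are the source and target matrices ($L_{ej}=1$ iff $e=(j,\cdot)$, $R_{ej}=1$ iff $e=(\cdot,j)$). The Hashimoto matrix is $B=W-\Delta$, where $\Delta=W\circ W^T$ (so $\Delta_{ef}=1$ iff $f$ is the reverse edge of $e$); thus $B_{ef}=1$ iff $e=(i,j)$, $f=(j,k)$ with $k\ne i$. *)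

(* Defs.v *)
From HB Require Import structures.
From mathcomp Require Import all_boot all_order all_algebra.
Set Implicit Arguments. Unset Strict Implicit. Unset Printing Implicit Defensive.
Import Order.TTheory GRing.Theory Num.Theory.
Local Open Scope ring_scope.

(* A digraph on V = {0,...,n-1} is given by its edge set E : {set 'I_n * 'I_n};
   the edge (i,j) goes from source i to target j. *)

Definition loopless (n : nat) (E : {set 'I_n * 'I_n}) : Prop :=
  forall i : 'I_n, (i, i) \notin E.

Definition edge (n : nat) (E : {set 'I_n * 'I_n}) (e : 'I_#|E|) : 'I_n * 'I_n :=
  @enum_val _ (mem E) e.
Arguments edge {n} E e.

Definition adjmx (R : nzRingType) (n : nat) (E : {set 'I_n * 'I_n}) : 'M[R]_n :=
  \matrix_(i, j) ((i, j) \in E)%:R.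

Definition recipmx (R : nzRingType) (n : nat) (E : {set 'I_n * 'I_n}) : 'M[R]_n :=
  \matrix_(i, j) (adjmx R E i j * (adjmx R E)^T i j).

Definition diagA2 (R : nzRingType) (n : nat) (E : {set 'I_n * 'I_n}) : 'M[R]_n :=
  \matrix_(i, j) ((i == j)%:R * (adjmx R E *m adjmx R E) i j).

Definition linemx (R : nzRingType) (n : nat) (E : {set 'I_n * 'I_n}) : 'M[R]_#|E| :=
  \matrix_(e < #|E|, f < #|E|) ((edge E e).2 == (edge E f).1)%:R.

Definition revmx (R : nzRingType) (n : nat) (E : {set 'I_n * 'I_n}) : 'M[R]_#|E| :=
  \matrix_(e < #|E|, f < #|E|) (linemx R E e f * (linemx R E)^T e f).

Definition hashimoto (R : nzRingType) (n : nat) (E : {set 'I_n * 'I_n}) : 'M[R]_#|E| :=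
  linemx R E - revmx R E.

Definition nrecip (n : nat) (E : {set 'I_n * 'I_n}) : nat :=
  #|[set p : 'I_n * 'I_n | [&& (p.1 < p.2)%N, p \in E & (p.2, p.1) \in E]]|.

Definition Mtau (R : comNzRingType) (n : nat) (E : {set 'I_n * 'I_n}) (tau t : R)
  : 'M[R]_n :=
  1%:M - t *: adjmx R E + (tau * t ^+ 2) *: (diagA2 R E - tau%:M)
  + (tau ^+ 2 * t ^+ 3) *: (adjmx R E - recipmx R E).

(* Main.v *)
Require Import Defs.
From HB Require Import structures.
From mathcomp Require Import all_boot all_order all_algebra.
From mathcomp Require Import ring.
Set Implicit Arguments. Unset Strict Implicit. Unset Printing Implicit Defensive.
Import Order.TTheory GRing.Theory Num.Theory.
Local Open Scope ring_scope.

Section Gen.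
Variable R : comNzRingType.

Lemma natr_and (a b : bool) : (a && b)%:R = a%:R * b%:R :> R.
Proof. by case: a; case: b; rewrite ?mul1r ?mul0r. Qed.

Lemma sumD_l (T : finType) (a : T) (F : T -> R) :
  \sum_j (a == j)%:R * F j = F a.
Proof.
rewrite (bigD1 a) //= eqxx mul1r big1 ?addr0 // => j /negbTE.
by rewrite eq_sym => ->; rewrite mul0r.
Qed.

Lemma sumD_r (T : finType) (a : T) (F : T -> R) :
  \sum_j F j * (j == a)%:R = F a.
Proof.
rewrite -[RHS](sumD_l a); apply: eq_bigr => j _.
by rewrite mulrC eq_sym.
Qed.

Variable n : nat.
Variable E : {set 'I_n * 'I_n}.
Notation m := #|E|.
Notation ed := (edge E).
Definition rv (p : 'I_n * 'I_n) := (p.2, p.1).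

Lemma rvK : involutive rv. Proof. by move=> [a b]. Qed.

Lemma Hsum (F : 'I_n * 'I_n -> R) :
  \sum_(e < m) F (ed e) = \sum_(x in E) F x.
Proof. by rewrite [RHS]big_enum_val. Qed.

Lemma Hsum1 (p : 'I_n * 'I_n) (F : 'I_n * 'I_n -> R) :
  \sum_(x in E) (x == p)%:R * F x = (p \in E)%:R * F p.
Proof.
case pE: (p \in E).
  rewrite (bigD1 p) //= eqxx !mul1r big1 ?addr0 // => x /andP[_ /negbTE ->].
  by rewrite mul0r.
rewrite mul0r big1 // => x xE; case: eqP => [xp|]; last by rewrite mul0r.
by move: xE; rewrite xp pE.
Qed.

Lemma edE e : ed e \in E.
Proof. exact: enum_valP. Qed.

Lemma ed_inj : injective ed.
Proof. exact: enum_val_inj. Qed.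

Definition Lm : 'M[R]_(m, n) := \matrix_(e, j) ((ed e).1 == j)%:R.
Definition Rm : 'M[R]_(m, n) := \matrix_(e, j) ((ed e).2 == j)%:R.
Definition qv (e : 'I_m) := rv (ed e) \in E.
Definition Qm : 'M[R]_m := \matrix_(e, f) ((qv e)%:R * (e == f)%:R).
Notation Dl := (revmx R E).

Lemma DlE e f : Dl e f = (ed f == rv (ed e))%:R.
Proof.
rewrite !mxE /rv; move: (ed f) (ed e) => [a b] [c d] /=; rewrite xpair_eqE natr_and mulrC.
by rewrite mulrC eq_sym.
Qed.

Lemma DlE2 e f : ((ed e).2 == (ed f).1)%:R * ((ed f).2 == (ed e).1)%:R
   = (ed f == rv (ed e))%:R :> R.
Proof. by rewrite -DlE !mxE. Qed.

Lemma F1 : linemx R E = Rm *m Lm^T.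
Proof.
apply/matrixP => e f; rewrite !mxE.
under eq_bigr do rewrite !mxE.
by rewrite sumD_l eq_sym.
Qed.

Lemma F2 : Dl *m Dl = Qm.
Proof.
apply/matrixP => e f; rewrite !mxE.
under eq_bigr do rewrite !DlE.
rewrite (Hsum (fun x => (x == rv (ed e))%:R * (ed f == rv x)%:R)) Hsum1 rvK.
by rewrite (inj_eq ed_inj) eq_sym.
Qed.

Lemma Dl_supp e f : Dl e f != 0 -> ed f = rv (ed e).
Proof. by rewrite DlE; case: (ed f =P rv (ed e)) => // _; rewrite eqxx. Qed.

Lemma F3 : Dl *m Qm = Dl.
Proof.
apply/matrixP => e f; rewrite mxE.
under eq_bigr do rewrite [Qm _ _]mxE mulrA.
rewrite sumD_r.
have [->|nz] := eqVneq (Dl e f) 0; first by rewrite mul0r.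
by rewrite /qv (Dl_supp nz) rvK edE mulr1.
Qed.

Lemma F3' : Qm *m Dl = Dl.
Proof.
apply/matrixP => e f; rewrite mxE.
under eq_bigr do rewrite [Qm _ _]mxE -mulrA.
rewrite -mulr_sumr sumD_l.
have [->|nz] := eqVneq (Dl e f) 0; first by rewrite mulr0.
by rewrite /qv -(Dl_supp nz) edE mul1r.
Qed.

Lemma pair_delta (x : 'I_n * 'I_n) i j :
  (x.1 == i)%:R * (x.2 == j)%:R = (x == (i, j))%:R :> R.
Proof. by case: x => a b; rewrite xpair_eqE natr_and. Qed.

Lemma F4 : Lm^T *m Rm = adjmx R E.
Proof.
apply/matrixP => i j; rewrite !mxE.
under eq_bigr do rewrite !mxE.
rewrite (Hsum (fun x => (x.1 == i)%:R * (x.2 == j)%:R)).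
rewrite (eq_bigr (fun x => (x == (i, j))%:R * 1)) ?Hsum1 ?mulr1 // => x _.
by rewrite pair_delta mulr1.
Qed.

Lemma LQ : Lm^T *m Qm = \matrix_(i, f) (Lm f i * (qv f)%:R).
Proof.
apply/matrixP => i f; rewrite !mxE.
under eq_bigr do rewrite !mxE mulrA.
by rewrite sumD_r.
Qed.

Lemma F5 : Lm^T *m Qm *m Rm = recipmx R E.
Proof.
apply/matrixP => i j; rewrite LQ !mxE.
under eq_bigr do rewrite !mxE.
rewrite (Hsum (fun x => (x.1 == i)%:R * (rv x \in E)%:R * (x.2 == j)%:R)).
under eq_bigr do rewrite mulrAC pair_delta.
by rewrite Hsum1.
Qed.

Lemma LD : Lm^T *m Dl = \matrix_(i, f) ((qv f)%:R * ((ed f).2 == i)%:R).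
Proof.
apply/matrixP => i f; rewrite mxE [RHS]mxE.
under eq_bigr do rewrite DlE !mxE.
rewrite (Hsum (fun x => (x.1 == i)%:R * (ed f == rv x)%:R)).
have H x : (ed f == rv x) = (x == rv (ed f)).
  by apply/eqP/eqP => ->; rewrite rvK.
under eq_bigr do rewrite H mulrC.
by rewrite Hsum1.
Qed.

Lemma Hsum_all (F : 'I_n * 'I_n -> R) :
  \sum_(x in E) F x = \sum_a \sum_b ((a, b) \in E)%:R * F (a, b).
Proof.
rewrite pair_big /= big_mkcond /=; apply: eq_bigr => [[a b]] _ /=.
by case: ((a, b) \in E); rewrite ?mul1r ?mul0r.
Qed.

Lemma F6 : Lm^T *m Dl *m Rm = diagA2 R E.
Proof.
apply/matrixP => i j; rewrite LD !mxE.
under eq_bigr do rewrite !mxE.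
rewrite (Hsum (fun x => (rv x \in E)%:R * (x.2 == i)%:R * (x.2 == j)%:R)).
under [in RHS]eq_bigr do rewrite !mxE.
have [<-|ij] := eqVneq i j; last first.
  rewrite mul0r big1 // => x _ /=.
  case H: (x.2 == i); last by rewrite mulr0 mul0r.
  by rewrite (eqP H) (negbTE ij) mulr0.
rewrite mul1r Hsum_all; apply: eq_bigr => a _ /=.
under eq_bigr do rewrite -mulrA -natrM mulnb andbb mulrA.
rewrite sumD_r /rv /=.
by rewrite mulrC.
Qed.


Lemma smAl (p q r : nat) (a : R) (A : 'M[R]_(p, q)) (B : 'M[R]_(q, r)) :
  (a *: A) *m B = a *: (A *m B).
Proof. by rewrite scalemxAl. Qed.
Lemma smAr (p q r : nat) (a : R) (A : 'M[R]_(p, q)) (B : 'M[R]_(q, r)) :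
  A *m (a *: B) = a *: (A *m B).
Proof. by rewrite scalemxAr. Qed.

Ltac mexp := rewrite ?(mulmxBl, mulmxBr, mulmxN, mulNmx, mulmxDl, mulmxDr, mul1mx, mulmx1, smAl, smAr, F2, F3, F3').

Section Key.
Variables tau t : R.
Definition sv := tau * t.
Definition xv := 1 - sv ^+ 2.
Definition Pm : 'M[R]_m := 1%:M + sv *: Dl.
Definition Xm : 'M[R]_m := xv *: (1%:M - Qm) + Qm - sv *: Dl.

Lemma PX : Pm *m Xm = xv%:M.
Proof.
rewrite /Pm /Xm; mexp.
move: (revmx R E) Qm => D Q.
apply/matrixP => e f; rewrite !mxE /xv; case: (e == f); rewrite /= ?mulr1n ?mulr0n; ring.
Qed.

Lemma XP : Xm *m Pm = xv%:M.
Proof.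
rewrite /Pm /Xm; mexp.
move: (revmx R E) Qm => D Q.
apply/matrixP => e f; rewrite !mxE /xv; case: (e == f); rewrite /= ?mulr1n ?mulr0n; ring.
Qed.

Lemma key :
  xv ^+ n * \det (1%:M - t *: (tau *: hashimoto R E + (1 - tau) *: linemx R E))
  = \det Pm * \det (Mtau E tau t).
Proof.
have eL : 1%:M - t *: (tau *: hashimoto R E + (1 - tau) *: linemx R E)
          = Pm - t *: (Rm *m Lm^T).
  rewrite /hashimoto /Pm F1; move: (revmx R E) (Rm *m Lm^T) => D W.
  apply/matrixP => e f; rewrite !mxE /sv; case: (e == f); rewrite /= ?mulr1n ?mulr0n; ring.
have N1 : block_mx 1%:M (t *: Rm) 0 1%:M *m block_mx (Pm - t *: (Rm *m Lm^T)) 0 Lm^T 1%:M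
          = block_mx Pm (t *: Rm) Lm^T 1%:M.
  rewrite mulmx_block ?mul1mx ?mulmx1 ?mul0mx ?mulmx0 ?add0r ?addr0.
  by rewrite -scalemxAl subrK.
have N2 : block_mx 1%:M 0 (- (Lm^T *m Xm)) xv%:M *m block_mx Pm (t *: Rm) Lm^T 1%:M
   = block_mx Pm (t *: Rm) 0 (xv%:M - t *: (Lm^T *m Xm *m Rm)).
  rewrite mulmx_block ?mul1mx ?mul0mx ?addr0 ?add0r ?mulmx1.
  rewrite !mulNmx -[Lm^T *m Xm *m Pm]mulmxA XP mul_mx_scalar mul_scalar_mx addNr smAr addrC.
  by [].
have eM : xv%:M - t *: (Lm^T *m Xm *m Rm) = Mtau E tau t.
  rewrite /Xm; mexp.
  rewrite F4 F5 F6 /Mtau.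
  move: (adjmx R E) (recipmx R E) (diagA2 R E) => A S Dg.
  apply/matrixP => i j; rewrite !mxE /xv /sv; case: (i == j); rewrite /= ?mulr1n ?mulr0n; move: (A i j) (S i j) (Dg i j) => a b c; ring.
have := congr1 determinant N2.
rewrite det_mulmx det_lblock det_ublock det1 mul1r det_scalar eM => <-.
by rewrite -N1 det_mulmx det_ublock det_lblock !det1 !mul1r mulr1 eL.
Qed.
End Key.

Section DetP.
Variable s : R.
Hypothesis ll : loopless E.

Definition Cset := [set x in E | rv x \in E].

Lemma card_recip : #|Cset| = (nrecip E + nrecip E)%N.
Proof.
set B := [set p : 'I_n * 'I_n | [&& (p.1 < p.2)%N, p \in E & (p.2, p.1) \in E]].
rewrite -(cardsID B Cset).
have -> : Cset :&: B = B.
  apply/setP => p; rewrite !inE /rv.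
  by case: (p \in E); case: ((p.2, p.1) \in E); rewrite ?andbF ?andbT.
have -> : Cset :\: B = rv @: B.
  rewrite (can_imset_pre _ rvK); apply/setP => -[a b]; rewrite !inE /rv /=.
  case abE: ((a, b) \in E); last by rewrite !andbF.
  case baE: ((b, a) \in E); last by rewrite !andbF.
  rewrite !andbT.
  case: (ltngtP a b) => // ab.
  by move: (ll a); rewrite (ord_inj ab) -{1}(ord_inj ab) abE.
by rewrite card_imset //; apply: (can_inj rvK).
Qed.

Lemma Hprod (F : 'I_n * 'I_n -> R) :
  \prod_(e < m) F (ed e) = \prod_(x in E) F x.
Proof. by rewrite [RHS]big_enum_val. Qed.

Lemma Qdet : \det (1%:M - (s ^+ 2) *: Qm) = (1 - s ^+ 2) ^+ (nrecip E + nrecip E).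
Proof.
have -> : 1%:M - (s ^+ 2) *: Qm = diag_mx (\row_e (1 - s ^+ 2 * (qv e)%:R)).
  apply/matrixP => e f; rewrite !mxE; case: (e == f); rewrite /= ?mulr1n ?mulr0n ?mulr1 ?mulr0 //.
  by rewrite subr0.
rewrite det_diag.
under eq_bigr do rewrite mxE.
rewrite (Hprod (fun x => 1 - s ^+ 2 * (rv x \in E)%:R)).
rewrite -card_recip -prodr_const big_mkcond [RHS]big_mkcond.
apply: eq_bigr => x _; rewrite /Cset inE.
by case: (x \in E); case: (rv x \in E); rewrite /= ?mulr1 ?mulr0 ?subr0.
Qed.

Definition sig (e : 'I_m) : R := if ((ed e).1 < (ed e).2)%N then -1 else 1.
Definition Sg : 'M[R]_m := diag_mx (\row_e sig e).

Lemma sig2 e : sig e * sig e = 1.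
Proof. by rewrite /sig; case: ifP; rewrite ?mulrNN mulr1. Qed.

Lemma ed_neq e : (ed e).1 != (ed e).2.
Proof.
apply/eqP => h; move: (ll (ed e).1) (edE e).
by rewrite {2}h -surjective_pairing => /negbTE ->.
Qed.

Lemma SgP : Sg *m (1%:M + s *: Dl) *m Sg = 1%:M - s *: Dl.
Proof.
rewrite /Sg mul_diag_mx mul_mx_diag; apply/matrixP => e f; rewrite !mxE DlE2.
case H: (ed f == rv (ed e)).
  have ef : (e == f) = false.
    apply/negbTE/eqP => ef; move: H; rewrite ef.
    have := ed_neq f; rewrite /rv; case: (ed f) => a b /= ab.
    by rewrite xpair_eqE (negbTE ab).
  rewrite ef /= ?mulr0n ?add0r ?sub0r mulr1 /sig (eqP H) /rv /=.
  have := ed_neq e; case: (ed e) => a b /= ab.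
  by case: (ltngtP a b) => [||/val_inj abe]; rewrite ?mulrN ?mulNr ?mulr1 ?mul1r ?opprK //;
     rewrite abe eqxx in ab.
rewrite /= !mulr0 ?addr0 ?subr0.
case ef: (e == f); last by rewrite /= mulr0n mulr0 mul0r.
by rewrite -(eqP ef) /= mulr1n mulr1 sig2.
Qed.

Lemma detSg2 : \det Sg * \det Sg = 1.
Proof.
rewrite /Sg det_diag -big_split /=; apply: big1 => e _.
by rewrite !mxE sig2.
Qed.

Lemma detP_sign : \det (1%:M - s *: Dl) = \det (1%:M + s *: Dl).
Proof.
rewrite -SgP !det_mulmx mulrC mulrA detSg2 mul1r.
by [].
Qed.

Lemma detP2 : \det (1%:M + s *: Dl) ^+ 2 = (1 - s ^+ 2) ^+ (nrecip E + nrecip E).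
Proof.
rewrite expr2 -{2}detP_sign -det_mulmx -Qdet; congr (\det _).
mexp; move: (revmx R E) Qm => D Q.
apply/matrixP => e f; rewrite !mxE; case: (e == f); rewrite /= ?mulr1n ?mulr0n; ring.
Qed.
End DetP.

End Gen.

Section Map.
Variables (R1 R2 : comNzRingType) (f : {rmorphism R1 -> R2}) (n : nat).
Variable E : {set 'I_n * 'I_n}.

Lemma map_adj : map_mx f (adjmx R1 E) = adjmx R2 E.
Proof. by apply/matrixP => i j; rewrite !mxE rmorph_nat. Qed.
Lemma map_line : map_mx f (linemx R1 E) = linemx R2 E.
Proof. by apply/matrixP => i j; rewrite !mxE rmorph_nat. Qed.
Lemma map_rev : map_mx f (revmx R1 E) = revmx R2 E.
Proof. by apply/matrixP => i j; rewrite !mxE rmorphM !rmorph_nat. Qed.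
Lemma map_recip : map_mx f (recipmx R1 E) = recipmx R2 E.
Proof. by apply/matrixP => i j; rewrite !mxE rmorphM !rmorph_nat. Qed.
Lemma map_diagA2 : map_mx f (diagA2 R1 E) = diagA2 R2 E.
Proof.
apply/matrixP => i j; rewrite !mxE rmorphM rmorph_nat rmorph_sum; congr (_ * _).
by apply: eq_bigr => k _; rewrite !mxE rmorphM !rmorph_nat.
Qed.
Lemma map_hash : map_mx f (hashimoto R1 E) = hashimoto R2 E.
Proof. by rewrite /hashimoto map_mxB map_line map_rev. Qed.

Lemma map_LHS (tau t : R1) :
  map_mx f (1%:M - t *: (tau *: hashimoto R1 E + (1 - tau) *: linemx R1 E))
  = 1%:M - f t *: (f tau *: hashimoto R2 E + (1 - f tau) *: linemx R2 E).
Proof.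
by rewrite /hashimoto !(map_mxB, map_mxD, map_mxZ, map_mx1, rmorphB, rmorph1) map_line map_rev.
Qed.

Lemma map_Mtau (tau t : R1) : map_mx f (Mtau E tau t) = Mtau E (f tau) (f t).
Proof.
rewrite /Mtau !(map_mxD, map_mxB, map_mxZ, map_mx1, map_scalar_mx).
by rewrite !(rmorphM, rmorphXn, map_mxN, map_mxZ, map_scalar_mx) map_adj map_recip map_diagA2.
Qed.
End Map.

Section Poly.
Variables (R : idomainType) (n : nat) (E : {set 'I_n * 'I_n}).
Hypothesis two : (2 : R) != 0.
Hypothesis ll : loopless E.

Lemma detP (s : R) : \det (1%:M + s *: revmx R E) = (1 - s ^+ 2) ^+ nrecip E.
Proof.
have ev z : (\det (1%:M + 'X *: revmx {poly R} E)).[z] = \det (1%:M + z *: revmx R E).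
  rewrite -horner_evalE -det_map_mx map_mxD map_mx1 map_mxZ map_rev.
  by rewrite /= horner_evalE hornerX.
have h2 := detP2 ('X : {poly R}) ll.
have /orP[/eqP hp|/eqP hp] : (\det (1%:M + 'X *: revmx {poly R} E) == (1 - 'X ^+ 2) ^+ nrecip E)
   || (\det (1%:M + 'X *: revmx {poly R} E) == - (1 - 'X ^+ 2) ^+ nrecip E).
  by rewrite -eqf_sqr h2 -exprM muln2 -addnn.
  by rewrite -ev hp !(hornerE, horner_exp).
exfalso; move: (ev 0); rewrite hp scale0r addr0 det1 !(hornerE, horner_exp).
rewrite expr0n /= subr0 expr1n => h.
by move: two; rewrite mulr2n -{2}h subrr eqxx.
Qed.
End Poly.

Theorem theorem4p9 (R : realFieldType) (n : nat) (E : {set 'I_n * 'I_n})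
  (tau t : R) :
  loopless E -> 0 <= tau -> tau <= 1 ->
  ((nrecip E < n)%N -> 1 - tau ^+ 2 * t ^+ 2 != 0) ->
  \det (1%:M - t *: (tau *: hashimoto R E + (1 - tau) *: linemx R E))
  = (1 - tau ^+ 2 * t ^+ 2) ^ ((nrecip E)%:Z - n%:Z) * \det (Mtau E tau t).
Proof.
move=> ll _ _ hyp.
set b := nrecip E.
have Hid (K : idomainType) (tw : (2 : K) != 0) (ta tt : K) :
    (1 - ta ^+ 2 * tt ^+ 2) ^+ n
      * \det (1%:M - tt *: (ta *: hashimoto K E + (1 - ta) *: linemx K E))
    = (1 - ta ^+ 2 * tt ^+ 2) ^+ b * \det (Mtau E ta tt).
  have := key E ta tt; rewrite /Pm detP // /xv /sv exprMn => ->.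
  by [].
have tw : (2 : R) != 0 by rewrite pnatr_eq0.
have [xnz|x0] := eqVneq (1 - tau ^+ 2 * t ^+ 2) 0; last first.
  apply: (mulfI (expf_neq0 n x0)); rewrite (Hid _ tw) [RHS]mulrA.
  have E1 : (1 - tau ^+ 2 * t ^+ 2) ^+ n * (1 - tau ^+ 2 * t ^+ 2) ^ (b%:Z - n%:Z)
            = (1 - tau ^+ 2 * t ^+ 2) ^+ b.
    rewrite -[X in X * _ = _]/((1 - tau ^+ 2 * t ^+ 2) ^ (n%:Z)) -expfzDr //.
    by rewrite [_%:Z + _]addrC subrK.
  by rewrite E1.
have bn : (n <= b)%N by rewrite leqNgt; apply/negP => /hyp; rewrite xnz eqxx.
rewrite subzn //.
set xp : {poly R} := 1 - (tau%:P) ^+ 2 * 'X ^+ 2.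
have xpnz : xp != 0.
  apply/eqP => h; have := congr1 (horner_eval 0) h.
  rewrite /xp rmorph0 rmorphB rmorph1 rmorphM !rmorphXn /= !horner_evalE hornerC hornerX.
  by rewrite expr0n /= mulr0 subr0 => /eqP; rewrite oner_eq0.
have tw' : (2 : {poly R}) != 0 by rewrite -polyC_natr polyC_eq0 pnatr_eq0.
have Hp := Hid _ tw' (tau%:P) 'X.
have Hp' : \det (1%:M - 'X *: (tau%:P *: hashimoto {poly R} E + (1 - tau%:P) *: linemx {poly R} E))
   = xp ^+ (b - n) * \det (Mtau E tau%:P 'X).
  apply: (mulfI (expf_neq0 n xpnz)); by rewrite Hp -/xp [RHS]mulrA -exprD subnKC.
have := congr1 (horner_eval t) Hp'.
rewrite -det_map_mx map_LHS rmorphM -det_map_mx map_Mtau /= !horner_evalE !hornerC hornerX.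
rewrite /xp !(hornerE, horner_exp) => ->.
by [].
Qed.
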